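(* Let $G$ be the graph on vertex set $\{a,b,p,q,x,z\}$ with edges $\{a,b\},\{a,p\},\{a,x\},\{b,x\},\{b,q\},\{x,p\},\{x,q\},\{p,z\},\{q,z\}$, and let $I(G)\subseteq K[a,b,p,q,x,z]$ ($K$ a field) be its edge ideal. Then $I(G)^s$ has linear quotients for all $s\ge 2$.
   Context: The edge ideal is generated by the monomials $uv$ for the edges $\{u,v\}$ of $G$. A monomial ideal generated in a single degree has linear quotients if its minimal monomial generators can be ordered $u_1>\cdots>u_r$ so that each colon ideal $(u_1,\ldots,u_i):u_{i+1}$, $1\le i<r$, is generated by a subset of the variables. *)

(* Defs.v *)
From mathcomp Require Import all_boot all_algebra.
From mathcomp Require Import mpoly.
Set Implicit Arguments. Unset Strict Implicit. Unset Printing Implicit Defensive.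
Import GRing.Theory.
Local Open Scope ring_scope.

Definition in_ideal (K : fieldType) (n : nat) (gs : seq {mpoly K[n]})
    (f : {mpoly K[n]}) : Prop :=
  exists c : 'I_(size gs) -> {mpoly K[n]},
    f = \sum_(i < size gs) c i * gs`_i.

Definition mon_dvd (n : nat) (m1 m2 : 'X_{1..n}) : bool :=
  [forall i : 'I_n, m1 i <= m2 i]%N.

Definition min_mon_gen (K : fieldType) (n : nat) (gs : seq {mpoly K[n]})
    (m : 'X_{1..n}) : Prop :=
  in_ideal gs 'X_[m] /\
  forall m' : 'X_{1..n}, in_ideal gs 'X_[m'] -> mon_dvd m' m -> m' = m.

(* The ideal generated by gs has linear quotients: its minimal monomial
   generators can be ordered u_1,...,u_r such that each colon ideal
   (u_1,...,u_i) : u_{i+1}, 1 <= i < r, is generated by a subset of the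
   variables.  (0-indexed: u = [:: u_1; ...; u_r], u_{i+1} = u`_i.) *)
Definition has_linear_quotients (K : fieldType) (n : nat)
    (gs : seq {mpoly K[n]}) : Prop :=
  exists u : seq 'X_{1..n},
    uniq u /\ (forall m, m \in u <-> min_mon_gen gs m) /\
    forall i : nat, (1 <= i < size u)%N ->
      exists S : {set 'I_n}, forall f : {mpoly K[n]},
        in_ideal [seq 'X_[m] | m <- take i u] (f * 'X_[nth 0%MM u i])
        <-> in_ideal [seq 'X_k | k <- enum S] f.

Definition va : 'I_6 := @Ordinal 6 0 isT.
Definition vb : 'I_6 := @Ordinal 6 1 isT.
Definition vp : 'I_6 := @Ordinal 6 2 isT.
Definition vq : 'I_6 := @Ordinal 6 3 isT.
Definition vx : 'I_6 := @Ordinal 6 4 isT.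
Definition vz : 'I_6 := @Ordinal 6 5 isT.

Definition edgesG : seq ('I_6 * 'I_6) :=
  [:: (va, vb); (va, vp); (va, vx); (vb, vx); (vb, vq);
      (vx, vp); (vx, vq); (vp, vz); (vq, vz)].

Definition edge_ideal_gens (K : fieldType) : seq {mpoly K[6]} :=
  [seq 'X_e.1 * 'X_e.2 | e <- edgesG].

Definition ideal_power_gens (K : fieldType) (n : nat) (gs : seq {mpoly K[n]})
    (s : nat) : seq {mpoly K[n]} :=
  [seq \prod_(j < s) gs`_(f j) | f : {ffun 'I_s -> 'I_(size gs)} <- enum {ffun 'I_s -> 'I_(size gs)}].

(* Main.v *)
Require Import Defs.
From mathcomp Require Import all_boot all_algebra.
From mathcomp Require Import mpoly.
From mathcomp Require Import zify.
Set Implicit Arguments. Unset Strict Implicit. Unset Printing Implicit Defensive.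

Definition condn (s a b p q x z : nat) : Prop :=
  a+b+p+q+x+z = 2*s /\ z <= p+q /\ a+z <= s /\ a+q <= s /\ b+p <= s /\ b+z <= s /\ p+q <= s /\ x+z <= s.

Fixpoint lexlt (l1 l2 : seq nat) : bool :=
  match l1, l2 with
  | x :: r, y :: r' => (x < y) || ((x == y) && lexlt r r')
  | _, _ => false
  end.

Lemma lex4P x0 x1 x2 x3 y0 y1 y2 y3 :
  lexlt [:: x0; x1; x2; x3] [:: y0; y1; y2; y3] <->
  (x0 < y0 \/ x0 = y0 /\ (x1 < y1 \/ x1 = y1 /\ (x2 < y2 \/ x2 = y2 /\ x3 < y3))).
Proof. rewrite /=; split=> H; lia. Qed.

Lemma lexlt_irr l : lexlt l l = false.
Proof. by elim: l => //= x l ->; rewrite ltnn eqxx. Qed.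

Lemma lexlt_asym l1 l2 : lexlt l1 l2 -> lexlt l2 l1 = false.
Proof.
elim: l1 l2 => [|x l1 IH] [|y l2] //=.
case/orP => [h|/andP[/eqP <- h]].
- have -> : (y < x) = false by lia.
  by have -> : (y == x) = false by lia.
- by rewrite ltnn eqxx /=; apply: IH.
Qed.

Lemma lexlt_trans l1 l2 l3 : lexlt l1 l2 -> lexlt l2 l3 -> lexlt l1 l3.
Proof.
elim: l1 l2 l3 => [|x l1 IH] [|y l2] [|z l3] //=.
case/orP=> [xy|/andP[/eqP-> h1]]; case/orP=> [yz|/andP[/eqP<- h2]].
- by rewrite (ltn_trans xy yz).
- by rewrite xy.
- by rewrite yz.
- by rewrite eqxx (IH _ _ h1 h2) orbT.
Qed.

Lemma lexlt_total l1 l2 : size l1 = size l2 -> l1 != l2 -> lexlt l1 l2 || lexlt l2 l1.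
Proof.
elim: l1 l2 => [|x l1 IH] [|y l2] // [hs] hne.
case: (ltngtP x y) => [h|h|e]; first by rewrite /= h.
- by rewrite /= h orbT.
- subst y; rewrite /= ltnn eqxx /=; apply: IH => //.
  by move: hne; rewrite eqseq_cons eqxx.
Qed.

Lemma lexlt_cat k k' c c' : size k = size k' -> lexlt (k ++ c) (k' ++ c') ->
  lexlt k k' \/ (k = k' /\ lexlt c c').
Proof.
elim: k k' => [|x k IH] [|y k'] //=; first by move=> _ h; right.
move=> [hs]; case/orP=> [->|/andP[/eqP-> h]]; first by left.
rewrite ltnn eqxx /=.
by case: (IH _ hs h) => [->|[-> ->]]; [left|right].
Qed.

Lemma lexlt_catl k k' c c' : size k = size k' -> lexlt k k' -> lexlt (k ++ c) (k' ++ c').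
Proof.
elim: k k' => [|x k IH] [|y k'] //= [hs].
case/orP=> [->//|/andP[/eqP-> h]].
by rewrite eqxx (IH _ hs h) orbT.
Qed.

Definition key0n (n0 n1 n2 n3 n4 : nat) : seq nat :=
  if [&& n1 == 0, n2 == 0, n3 == 0 & n4 == 1] then [:: 2*n0; 1; 0; 1]
  else if [&& n1 == 0, n2 == 0, n4 == 0 & n3 == 1] then [:: 2*n0; 1; 0; 0]
  else if (n1 == 0) && (n2 == 0) then
    (if n4 == 0 then [:: 2*n0+2; 0; 0; 2*n3+2] else [:: 2*n0+2; 0; 0; 2*n3+5])
  else [:: 2*n0+2; n1; n2; 2*n3+2].

Variant key0n_spec (n0 n1 n2 n3 n4 : nat) : seq nat -> Prop :=
| KN0 : n1 = 0 -> n2 = 0 -> n3 = 0 -> n4 = 1 -> key0n_spec n0 n1 n2 n3 n4 [:: 2*n0; 1; 0; 1]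
| KN1 : n1 = 0 -> n2 = 0 -> n4 = 0 -> n3 = 1 -> key0n_spec n0 n1 n2 n3 n4 [:: 2*n0; 1; 0; 0]
| KN2 : n1 = 0 -> n2 = 0 -> n4 = 0 -> n3 <> 1 -> key0n_spec n0 n1 n2 n3 n4 [:: 2*n0+2; 0; 0; 2*n3+2]
| KN3 : n1 = 0 -> n2 = 0 -> 0 < n4 -> 2 <= n3 + n4 -> key0n_spec n0 n1 n2 n3 n4 [:: 2*n0+2; 0; 0; 2*n3+5]
| KN4 : 0 < n1 + n2 -> key0n_spec n0 n1 n2 n3 n4 [:: 2*n0+2; n1; n2; 2*n3+2].

Lemma key0nP n0 n1 n2 n3 n4 : key0n_spec n0 n1 n2 n3 n4 (key0n n0 n1 n2 n3 n4).
Proof.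
rewrite /key0n.
case: ifP => [/and4P[/eqP h1 /eqP h2 /eqP h3 /eqP h4]|H0]; first exact: KN0.
case: ifP => [/and4P[/eqP h1 /eqP h2 /eqP h4 /eqP h3]|H1]; first exact: KN1.
case: ifP => [/andP[/eqP h1 /eqP h2]|H2].
- case: ifP => [/eqP h4|/negbT h4].
  + apply: KN2 => // e3. by move: H1; rewrite h1 h2 h4 e3.
  + apply: KN3 => //; first by lia.
    case: (leqP 2 (n3 + n4)) => // hh. exfalso.
    have e4 : n4 = 1 by lia. have e3 : n3 = 0 by lia.
    by move: H0; rewrite h1 h2 e3 e4.
- apply: KN4. case: (posnP n1) => [e1|]; last by lia.
  case: (posnP n2) => [e2|]; last by lia.
  by move: H2; rewrite e1 e2.
Qed.

Lemma size_key0n n0 n1 n2 n3 n4 : size (key0n n0 n1 n2 n3 n4) = 4.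
Proof. by case: key0nP. Qed.

Lemma key0n_inj n0 n1 n2 n3 n4 m0 m1 m2 m3 m4 :
  n0+n1+n2+n3+n4 = m0+m1+m2+m3+m4 ->
  key0n n0 n1 n2 n3 n4 = key0n m0 m1 m2 m3 m4 ->
  [/\ n0 = m0, n1 = m1, n2 = m2, n3 = m3 & n4 = m4].
Proof.
move=> hs.
case: (key0nP n0 n1 n2 n3 n4) => [h1 h2 h3 h4|h1 h2 h3 h4|h1 h2 h3 h4|h1 h2 h3 h4|h1];
case: (key0nP m0 m1 m2 m3 m4) => [g1 g2 g3 g4|g1 g2 g3 g4|g1 g2 g3 g4|g1 g2 g3 g4|g1] E;
case: E => *; split; lia.
Qed.

Lemma key0n_congr a0 a1 a2 a3 a4 b0 b1 b2 b3 b4 a0' a1' a2' a3' a4' b0' b1' b2' b3' b4' :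
  lexlt (key0n a0 a1 a2 a3 a4) (key0n b0 b1 b2 b3 b4) ->
  a0 = a0' -> a1 = a1' -> a2 = a2' -> a3 = a3' -> a4 = a4' ->
  b0 = b0' -> b1 = b1' -> b2 = b2' -> b3 = b3' -> b4 = b4' ->
  lexlt (key0n a0' a1' a2' a3' a4') (key0n b0' b1' b2' b3' b4').
Proof. by move=> h; do 10 move=> <-. Qed.

Definition keyn (s a b p q x z : nat) : seq nat :=
  if 0 < x then [:: 1; x; a; b; p; q; z; 0; 0; 0; 0]
  else 0 :: key0n (s - p - q) (s - z - a) (s - p - b) (s - q - a) (s - z - b) ++ [:: a; b; p; q; x; z].
Arguments keyn : simpl never.
Arguments condn : simpl never.

Lemma size_keyn s a b p q x z : size (keyn s a b p q x z) = 11.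
Proof. by rewrite /keyn; case: ifP => //= _; rewrite size_cat size_key0n. Qed.

Lemma keyn_up s a b p q x z a' b' p' q' x' z' : x < x' ->
  lexlt (keyn s a b p q x z) (keyn s a' b' p' q' x' z').
Proof.
move=> h; rewrite /keyn; have -> : 0 < x' by lia.
by case: (posnP x) => [x0|xp] /=; lia.
Qed.

Lemma keyn_same s a b p q x z a' b' p' q' x' z' : 0 < x -> x' = x ->
  (a < a' \/ a = a' /\ (b < b' \/ b = b' /\ (p < p' \/ p = p' /\ (q < q' \/ q = q' /\ z < z')))) ->
  lexlt (keyn s a b p q x z) (keyn s a' b' p' q' x' z').
Proof.
move=> hx -> h; rewrite /keyn hx /=; rewrite ltnn eqxx /=. lia.
Qed.

Lemma keyn_zero s a b p q x z a' b' p' q' x' z' : x = 0 -> x' = 0 ->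
  lexlt (key0n (s - p - q) (s - z - a) (s - p - b) (s - q - a) (s - z - b))
        (key0n (s - p' - q') (s - z' - a') (s - p' - b') (s - q' - a') (s - z' - b')) ->
  lexlt (keyn s a b p q x z) (keyn s a' b' p' q' x' z').
Proof.
move=> -> -> h; rewrite /keyn /= ?eqxx /=.
by apply: lexlt_catl => //; rewrite !size_key0n.
Qed.

Lemma lexlt_cons x l l' : lexlt (x :: l) (x :: l') = lexlt l l'.
Proof. by rewrite /= ltnn eqxx. Qed.

Lemma lexltE2 x y l l' : lexlt (x :: l) (y :: l') -> x < y \/ x = y /\ lexlt l l'.
Proof. by case/orP=> [h|/andP[/eqP-> h]]; [left|right]. Qed.

Lemma layer0_n s a b p q x z : condn s a b p q x z -> x = 0 ->
  exists n0 n1 n2 n3 n4, [/\ s - p - q = n0, s - z - a = n1, s - p - b = n2, s - q - a = n3 & s - z - b = n4] /\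
    ([/\ a = n4 + n0, b = n0 + n1, q = n1 + n2, z = n2 + n3 & p = n3 + n4] /\ n0+n1+n2+n3+n4 = s).
Proof.
rewrite /condn => h x0.
exists (s - p - q), (s - z - a), (s - p - b), (s - q - a), (s - z - b); split=> //.
split; [split|]; lia.
Qed.

Lemma keyn_cases s a b p q x z a' b' p' q' x' z' :
  condn s a b p q x z -> condn s a' b' p' q' x' z' ->
  lexlt (keyn s a b p q x z) (keyn s a' b' p' q' x' z') ->
  x < x' \/
  (0 < x /\ x = x' /\
    (a < a' \/ a = a' /\ (b < b' \/ b = b' /\ (p < p' \/ p = p' /\ (q < q' \/ q = q' /\ z < z'))))) \/
  (x = 0 /\ x' = 0 /\
   lexlt (key0n (s - p - q) (s - z - a) (s - p - b) (s - q - a) (s - z - b))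
        (key0n (s - p' - q') (s - z' - a') (s - p' - b') (s - q' - a') (s - z' - b'))).
Proof.
rewrite /condn => hu hv; rewrite /keyn.
case: (posnP x) => [x0|xp]; case: (posnP x') => [x0'|xp'] /=.
- have [n0 [n1 [n2 [n3 [n4 [[e0 e1 e2 e3 e4] [[d0 d1 d2 d3 d4] hs]]]]]]] := layer0_n hu x0.
  have [m0 [m1 [m2 [m3 [m4 [[f0 f1 f2 f3 f4] [[g0 g1 g2 g3 g4] hs']]]]]]] := layer0_n hv x0'.
  rewrite e0 e1 e2 e3 e4 f0 f1 f2 f3 f4.
  move=> /lexlt_cat []; first by rewrite !size_key0n.
  + by move=> h; right; right; split; [|split].
  + move=> [/key0n_inj []]; first by rewrite hs hs'.
    move=> E0 E1 E2 E3 E4.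
    by rewrite d0 d1 d2 d3 d4 g0 g1 g2 g3 g4 E0 E1 E2 E3 E4 x0 x0' lexlt_irr.
- by move=> _; left; rewrite x0.
- by [].
- move=> H; have := (H : lexlt [:: 1; x; a; b; p; q; z; 0; 0; 0; 0] [:: 1; x'; a'; b'; p'; q'; z'; 0; 0; 0; 0]); clear H.
  rewrite lexlt_cons => /lexltE2 [h|[ex /lexltE2 [h|[ea /lexltE2 [h|[eb /lexltE2 [h|[ep /lexltE2 [h|[eq /lexltE2 [h|[ez //]]]]]]]]]]]].
  + by left.
  + by right; left; split => //; split => //; left.
  + by right; left; split => //; split => //; right; split => //; left.
  + by right; left; split => //; split => //; right; split => //; right; split => //; left.
  + by right; left; split => //; split => //; right; split => //; right; split => //; right; split => //; left.
  + by right; left; split => //; split => //; right; split => //; right; split => //; right; split => //; right.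
Qed.

(* vectors as functions nat -> nat, coordinates 0..5 = a b p q x z *)
Definition cond6 s (u : nat -> nat) := condn s (u 0) (u 1) (u 2) (u 3) (u 4) (u 5).
Definition key6 s (u : nat -> nat) := keyn s (u 0) (u 1) (u 2) (u 3) (u 4) (u 5).
Definition mv (u : nat -> nat) (l t : nat) : nat -> nat := fun i => u i + (i == l) - (i == t).
Definition Wit6 s (u v : nat -> nat) : Prop :=
  exists l t, l < 6 /\ t < 6 /\ l != t /\ 0 < u t /\ u l < v l /\
    cond6 s (mv u l t) /\ lexlt (key6 s u) (key6 s (mv u l t)).

Ltac fin2 L T := exists L, T; rewrite /cond6 /key6 /mv /=;
  split; [done|split; [done|split; [done|split; [lia|split; [lia|split; [rewrite /condn; lia| apply: keyn_same; lia]]]]]].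
Ltac fin1 T := exists 4, T; rewrite /cond6 /key6 /mv /=;
  split; [done|split; [done|split; [done|split; [lia|split; [lia|split; [rewrite /condn; lia| apply: keyn_up; lia]]]]]].

Lemma case1 s (u v : nat -> nat) : cond6 s u -> cond6 s v -> u 4 < v 4 -> Wit6 s u v.
Proof.
rewrite /cond6 /condn => Hu Hv Hx.
case: (posnP (u 5)) => [z0|zp]; last by fin1 5.
case: (posnP (u 0)) => [a0|ap]; last by fin1 0.
case: (posnP (u 1)) => [b0|bp]; last by fin1 1.
case: (posnP (u 2)) => [p0|pp]; last by fin1 2.
fin1 3.
Qed.

Lemma case2_0 s (u v : nat -> nat) : cond6 s u -> cond6 s v -> 0 < u 4 -> u 4 = v 4 ->
  u 0 < v 0 -> Wit6 s u v.
Proof. rewrite /cond6 /condn => Hu Hv Hx Hxx; intros.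
  case: (leqP ((u 2)+(u 3)) ((u 5))) => ?.
  {
    case: (leqP ((u 2)) (0)) => ?.
    {
      case: (leqP (s) ((u 0)+(u 5))) => ?.
      {
        case: (leqP ((v 1)) ((u 1))) => ?.
        {
          fin2 2 3.
        }
        {
          fin2 1 5.
        }
      }
      {
        fin2 0 1.
      }
    }
    {
      fin2 0 5.
    }
  }
  {
    case: (leqP ((u 3)) (0)) => ?.
    {
      case: (leqP ((u 5)) (0)) => ?.
      {
        fin2 0 2.
      }
      {
        fin2 0 5.
      }
    }
    {
      case: (leqP (s) ((u 0)+(u 5))) => ?.
      {
        case: (leqP ((v 1)) ((u 1))) => ?.
        {
          case: (leqP ((v 2)) ((u 2))) => ?.
          {
            fin2 0 5.
          }
          {
            fin2 2 3.
          }
        }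
        {
          fin2 1 2.
        }
      }
      {
        fin2 0 3.
      }
    }
  }
Qed.

Lemma case2_1 s (u v : nat -> nat) : cond6 s u -> cond6 s v -> 0 < u 4 -> u 4 = v 4 ->
  u 0 = v 0 -> u 1 < v 1 -> Wit6 s u v.
Proof. rewrite /cond6 /condn => Hu Hv Hx Hxx; intros.
  case: (leqP ((u 2)) (0)) => ?.
  {
    case: (leqP ((u 5)) (0)) => ?.
    {
      fin2 1 3.
    }
    {
      fin2 1 5.
    }
  }
  {
    case: (leqP ((u 2)+(u 3)) ((u 5))) => ?.
    {
      case: (leqP ((v 3)) ((u 3))) => ?.
      {
        fin2 1 5.
      }
      {
        fin2 3 5.
      }
    }
    {
      case: (leqP (s) ((u 1)+(u 5))) => ?.
      {
        case: (leqP ((v 3)) ((u 3))) => ?.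
        {
          fin2 1 5.
        }
        {
          fin2 3 5.
        }
      }
      {
        fin2 1 2.
      }
    }
  }
Qed.

Lemma case2_2 s (u v : nat -> nat) : cond6 s u -> cond6 s v -> 0 < u 4 -> u 4 = v 4 ->
  u 0 = v 0 -> u 1 = v 1 -> u 2 < v 2 -> Wit6 s u v.
Proof. rewrite /cond6 /condn => Hu Hv Hx Hxx; intros.
  case: (leqP ((u 3)) (0)) => ?.
  {
    fin2 2 5.
  }
  {
    fin2 2 3.
  }
Qed.

Lemma case2_3 s (u v : nat -> nat) : cond6 s u -> cond6 s v -> 0 < u 4 -> u 4 = v 4 ->
  u 0 = v 0 -> u 1 = v 1 -> u 2 = v 2 -> u 3 < v 3 -> Wit6 s u v.
Proof. rewrite /cond6 /condn => Hu Hv Hx Hxx; intros.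
  fin2 3 5.
Qed.

Lemma case2_4 s (u v : nat -> nat) : cond6 s u -> cond6 s v -> 0 < u 4 -> u 4 = v 4 ->
  u 0 = v 0 -> u 1 = v 1 -> u 2 = v 2 -> u 3 = v 3 -> u 5 < v 5 -> Wit6 s u v.
Proof. rewrite /cond6 /condn => Hu Hv Hx Hxx; intros.
  exfalso; lia.
Qed.


Ltac pick k := match k with 0 => first [left | idtac] | S ?k' => right; pick k' end.
Ltac pk3 k := pick k; split; [lia|split; [lia| case: key0nP => *; apply/lex4P; lia]].
Definition W3n n0 n1 n2 n3 n4 m0 m1 m2 m3 m4 :=
  (n4 + n0 < m4 + m0 /\ (1 <= n1 /\ 1 <= n3) /\ lexlt (key0n n0 n1 n2 n3 n4) (key0n (n0) (n1-1) (n2+1) (n3-1) (n4+1))) \/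
  (n4 + n0 < m4 + m0 /\ (1 <= n1 /\ 1 <= n3) /\ lexlt (key0n n0 n1 n2 n3 n4) (key0n (n0+1) (n1-1) (n2+1) (n3-1) (n4))) \/
  (n4 + n0 < m4 + m0 /\ (1 <= n1) /\ lexlt (key0n n0 n1 n2 n3 n4) (key0n (n0+1) (n1-1) (n2) (n3) (n4))) \/
  (n4 + n0 < m4 + m0 /\ (1 <= n3) /\ lexlt (key0n n0 n1 n2 n3 n4) (key0n (n0) (n1) (n2) (n3-1) (n4+1))) \/
  (n0 + n1 < m0 + m1 /\ (1 <= n2 /\ 1 <= n4) /\ lexlt (key0n n0 n1 n2 n3 n4) (key0n (n0) (n1+1) (n2-1) (n3+1) (n4-1))) \/
  (n0 + n1 < m0 + m1 /\ (1 <= n4) /\ lexlt (key0n n0 n1 n2 n3 n4) (key0n (n0+1) (n1) (n2) (n3) (n4-1))) \/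
  (n0 + n1 < m0 + m1 /\ (1 <= n2 /\ 1 <= n4) /\ lexlt (key0n n0 n1 n2 n3 n4) (key0n (n0+1) (n1) (n2-1) (n3+1) (n4-1))) \/
  (n0 + n1 < m0 + m1 /\ (1 <= n2) /\ lexlt (key0n n0 n1 n2 n3 n4) (key0n (n0) (n1+1) (n2-1) (n3) (n4))) \/
  (n3 + n4 < m3 + m4 /\ (1 <= n0 /\ 1 <= n2) /\ lexlt (key0n n0 n1 n2 n3 n4) (key0n (n0-1) (n1+1) (n2-1) (n3+1) (n4))) \/
  (n3 + n4 < m3 + m4 /\ (1 <= n0) /\ lexlt (key0n n0 n1 n2 n3 n4) (key0n (n0-1) (n1) (n2) (n3) (n4+1))) \/
  (n3 + n4 < m3 + m4 /\ (1 <= n2) /\ lexlt (key0n n0 n1 n2 n3 n4) (key0n (n0) (n1) (n2-1) (n3+1) (n4))) \/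
  (n3 + n4 < m3 + m4 /\ (1 <= n0 /\ 1 <= n2) /\ lexlt (key0n n0 n1 n2 n3 n4) (key0n (n0-1) (n1+1) (n2-1) (n3) (n4+1))) \/
  (n1 + n2 < m1 + m2 /\ (1 <= n0) /\ lexlt (key0n n0 n1 n2 n3 n4) (key0n (n0-1) (n1+1) (n2) (n3) (n4))) \/
  (n1 + n2 < m1 + m2 /\ (1 <= n0 /\ 1 <= n3) /\ lexlt (key0n n0 n1 n2 n3 n4) (key0n (n0-1) (n1) (n2+1) (n3-1) (n4+1))) \/
  (n1 + n2 < m1 + m2 /\ (1 <= n3) /\ lexlt (key0n n0 n1 n2 n3 n4) (key0n (n0) (n1) (n2+1) (n3-1) (n4))) \/
  (n1 + n2 < m1 + m2 /\ (1 <= n0 /\ 1 <= n3) /\ lexlt (key0n n0 n1 n2 n3 n4) (key0n (n0-1) (n1+1) (n2) (n3-1) (n4+1))) \/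
  (n2 + n3 < m2 + m3 /\ (1 <= n4) /\ lexlt (key0n n0 n1 n2 n3 n4) (key0n (n0) (n1) (n2) (n3+1) (n4-1))) \/
  (n2 + n3 < m2 + m3 /\ (1 <= n1) /\ lexlt (key0n n0 n1 n2 n3 n4) (key0n (n0) (n1-1) (n2+1) (n3) (n4))) \/
  (n2 + n3 < m2 + m3 /\ (1 <= n1 /\ 1 <= n4) /\ lexlt (key0n n0 n1 n2 n3 n4) (key0n (n0+1) (n1-1) (n2+1) (n3) (n4-1))) \/
  (n2 + n3 < m2 + m3 /\ (1 <= n1 /\ 1 <= n4) /\ lexlt (key0n n0 n1 n2 n3 n4) (key0n (n0+1) (n1-1) (n2) (n3+1) (n4-1))).
Lemma case3n s n0 n1 n2 n3 n4 m0 m1 m2 m3 m4 : 2 <= s -> n0+n1+n2+n3+n4 = s -> m0+m1+m2+m3+m4 = s ->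
  lexlt (key0n n0 n1 n2 n3 n4) (key0n m0 m1 m2 m3 m4) -> W3n n0 n1 n2 n3 n4 m0 m1 m2 m3 m4.
Proof.
move=> Hs Hn Hm Hlt; rewrite /W3n.
case: (key0nP n0 n1 n2 n3 n4) Hlt => [h1 h2 h3 h4|h1 h2 h3 h4|h1 h2 h3 h4|h1 h2 h3 h4|h1] Hlt;
  case: (key0nP m0 m1 m2 m3 m4) Hlt => [g1 g2 g3 g4|g1 g2 g3 g4|g1 g2 g3 g4|g1 g2 g3 g4|g1] /lex4P; case=> [?|[? [?|[? [?|[? ?]]]]]].
- exfalso; lia.
- exfalso; lia.
- exfalso; lia.
- exfalso; lia.
- exfalso; lia.
- exfalso; lia.
- exfalso; lia.
- exfalso; lia.
-
  pk3 5.
- exfalso; lia.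
- exfalso; lia.
- exfalso; lia.
- exfalso; lia.
- exfalso; lia.
- exfalso; lia.
- exfalso; lia.
-
  pk3 12.
-
  pk3 5.
-
  pk3 12.
-
  pk3 12.
- exfalso; lia.
- exfalso; lia.
- exfalso; lia.
-
  pk3 3.
- exfalso; lia.
- exfalso; lia.
- exfalso; lia.
- exfalso; lia.
-
  pk3 3.
- exfalso; lia.
- exfalso; lia.
- exfalso; lia.
- exfalso; lia.
- exfalso; lia.
- exfalso; lia.
- exfalso; lia.
-
  pk3 12.
-
  pk3 12.
-
  pk3 12.
-
  pk3 12.
-
  pk3 3.
-
  pk3 3.
- exfalso; lia.
- exfalso; lia.
-
  pk3 3.
-
  pk3 3.
- exfalso; lia.
- exfalso; lia.
-
  pk3 3.
- exfalso; lia.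
- exfalso; lia.
- exfalso; lia.
-
  pk3 3.
- exfalso; lia.
- exfalso; lia.
-
  pk3 3.
-
  pk3 3.
-
  pk3 14.
-
  pk3 14.
- exfalso; lia.
-
  pk3 5.
-
  pk3 5.
- exfalso; lia.
- exfalso; lia.
-
  pk3 5.
-
  pk3 5.
- exfalso; lia.
- exfalso; lia.
-
  pk3 5.
- exfalso; lia.
- exfalso; lia.
-
  pk3 16.
-
  pk3 5.
- exfalso; lia.
- exfalso; lia.
-
  pk3 16.
-
  pk3 5.
-
  pk3 5.
-
  case: (leqP (n3) (0)) => ?.
  {
    pk3 16.
  }
  {
    pk3 14.
  }
- exfalso; lia.
-
  case: (leqP (n1) (0)) => ?.
  {
    pk3 7.
  }
  {
    pk3 2.
  }
-
  pk3 7.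
- exfalso; lia.
- exfalso; lia.
-
  case: (leqP (n1) (0)) => ?.
  {
    pk3 7.
  }
  {
    case: (leqP (n4) (1)) => ?.
    {
      pk3 2.
    }
    {
      pk3 5.
    }
  }
-
  pk3 7.
- exfalso; lia.
- exfalso; lia.
-
  case: (leqP (n1) (0)) => ?.
  {
    pk3 7.
  }
  {
    case: (leqP (m4+m0) (n4+n0)) => ?.
    {
      pk3 16.
    }
    {
      case: (leqP (n3) (0)) => ?.
      {
        case: (leqP (n0) (0)) => ?.
        {
          case: (leqP (n1) (1)) => ?.
          {
            case: (leqP (n2) (0)) => ?.
            {
              pk3 5.
            }
            {
              pk3 2.
            }
          }
          {
            pk3 2.
          }
        }
        {
          case: (leqP (n0) (1)) => ?.
          {
            case: (leqP (n1) (1)) => ?.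
            {
              case: (leqP (n4) (0)) => ?.
              {
                pk3 2.
              }
              {
                pk3 5.
              }
            }
            {
              pk3 2.
            }
          }
          {
            case: (leqP (n1) (1)) => ?.
            {
              case: (leqP (n4) (0)) => ?.
              {
                pk3 2.
              }
              {
                pk3 5.
              }
            }
            {
              pk3 2.
            }
          }
        }
      }
      {
        pk3 1.
      }
    }
  }
- exfalso; lia.
- exfalso; lia.
- exfalso; lia.
-
  case: (leqP (n1) (0)) => ?.
  {
    pk3 7.
  }
  {
    case: (leqP (m4+m0) (n4+n0)) => ?.
    {
      pk3 16.
    }
    {
      pk3 2.
    }
  }
- exfalso; lia.
- exfalso; lia.
- exfalso; lia.
-
  case: (leqP (n1) (0)) => ?.
  {
    pk3 7.
  }
  {
    case: (leqP (m4+m0) (n4+n0)) => ?.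
    {
      case: (leqP (m0+m1) (n0+n1)) => ?.
      {
        pk3 16.
      }
      {
        pk3 5.
      }
    }
    {
      case: (leqP (n3) (0)) => ?.
      {
        pk3 2.
      }
      {
        pk3 1.
      }
    }
  }
-
  case: (leqP (n2) (0)) => ?.
  {
    case: (leqP (n3) (0)) => ?.
    {
      pk3 5.
    }
    {
      pk3 14.
    }
  }
  {
    pk3 7.
  }
-
  case: (leqP (n3) (0)) => ?.
  {
    pk3 16.
  }
  {
    pk3 14.
  }
-
  pk3 16.
Qed.


Lemma case3d s (u v : nat -> nat) : 2 <= s -> cond6 s u -> cond6 s v -> u 4 = 0 -> v 4 = 0 ->
  lexlt (key0n (s - u 2 - u 3) (s - u 5 - u 0) (s - u 2 - u 1) (s - u 3 - u 0) (s - u 5 - u 1))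
        (key0n (s - v 2 - v 3) (s - v 5 - v 0) (s - v 2 - v 1) (s - v 3 - v 0) (s - v 5 - v 1)) ->
  Wit6 s u v.
Proof.
move=> Hs Hu Hv ux vx.
have [n0 [n1 [n2 [n3 [n4 [[e0 e1 e2 e3 e4] [[d0 d1 d2 d3 d4] hs]]]]]]] := layer0_n Hu ux.
have [m0 [m1 [m2 [m3 [m4 [[f0 f1 f2 f3 f4] [[g0 g1 g2 g3 g4] hs']]]]]]] := layer0_n Hv vx.
rewrite e0 e1 e2 e3 e4 f0 f1 f2 f3 f4 => Hlt.
clear e0 e1 e2 e3 e4 f0 f1 f2 f3 f4.
have := case3n Hs hs hs' Hlt; clear Hlt.
rewrite /W3n; case=> [H|[H|[H|[H|[H|[H|[H|[H|[H|[H|[H|[H|[H|[H|[H|[H|[H|[H|[H|H]]]]]]]]]]]]]]]]]]].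
  + exists 0, 1; rewrite /cond6 /key6 /mv /= ?d0 ?d1 ?d2 ?d3 ?d4 ?ux ?g0 ?g1 ?g2 ?g3 ?g4 ?vx.
    case: H => H1 [H2 H3].
    split; [done|split; [done|split; [done|split; [lia|split; [lia|split; [rewrite /condn; lia| ]]]]]].
    apply: keyn_zero; [lia|lia|]. apply: (key0n_congr H3); lia.
  + exists 0, 2; rewrite /cond6 /key6 /mv /= ?d0 ?d1 ?d2 ?d3 ?d4 ?ux ?g0 ?g1 ?g2 ?g3 ?g4 ?vx.
    case: H => H1 [H2 H3].
    split; [done|split; [done|split; [done|split; [lia|split; [lia|split; [rewrite /condn; lia| ]]]]]].
    apply: keyn_zero; [lia|lia|]. apply: (key0n_congr H3); lia.
  + exists 0, 3; rewrite /cond6 /key6 /mv /= ?d0 ?d1 ?d2 ?d3 ?d4 ?ux ?g0 ?g1 ?g2 ?g3 ?g4 ?vx.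
    case: H => H1 [H2 H3].
    split; [done|split; [done|split; [done|split; [lia|split; [lia|split; [rewrite /condn; lia| ]]]]]].
    apply: keyn_zero; [lia|lia|]. apply: (key0n_congr H3); lia.
  + exists 0, 5; rewrite /cond6 /key6 /mv /= ?d0 ?d1 ?d2 ?d3 ?d4 ?ux ?g0 ?g1 ?g2 ?g3 ?g4 ?vx.
    case: H => H1 [H2 H3].
    split; [done|split; [done|split; [done|split; [lia|split; [lia|split; [rewrite /condn; lia| ]]]]]].
    apply: keyn_zero; [lia|lia|]. apply: (key0n_congr H3); lia.
  + exists 1, 0; rewrite /cond6 /key6 /mv /= ?d0 ?d1 ?d2 ?d3 ?d4 ?ux ?g0 ?g1 ?g2 ?g3 ?g4 ?vx.
    case: H => H1 [H2 H3].
    split; [done|split; [done|split; [done|split; [lia|split; [lia|split; [rewrite /condn; lia| ]]]]]].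
    apply: keyn_zero; [lia|lia|]. apply: (key0n_congr H3); lia.
  + exists 1, 2; rewrite /cond6 /key6 /mv /= ?d0 ?d1 ?d2 ?d3 ?d4 ?ux ?g0 ?g1 ?g2 ?g3 ?g4 ?vx.
    case: H => H1 [H2 H3].
    split; [done|split; [done|split; [done|split; [lia|split; [lia|split; [rewrite /condn; lia| ]]]]]].
    apply: keyn_zero; [lia|lia|]. apply: (key0n_congr H3); lia.
  + exists 1, 3; rewrite /cond6 /key6 /mv /= ?d0 ?d1 ?d2 ?d3 ?d4 ?ux ?g0 ?g1 ?g2 ?g3 ?g4 ?vx.
    case: H => H1 [H2 H3].
    split; [done|split; [done|split; [done|split; [lia|split; [lia|split; [rewrite /condn; lia| ]]]]]].
    apply: keyn_zero; [lia|lia|]. apply: (key0n_congr H3); lia.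
  + exists 1, 5; rewrite /cond6 /key6 /mv /= ?d0 ?d1 ?d2 ?d3 ?d4 ?ux ?g0 ?g1 ?g2 ?g3 ?g4 ?vx.
    case: H => H1 [H2 H3].
    split; [done|split; [done|split; [done|split; [lia|split; [lia|split; [rewrite /condn; lia| ]]]]]].
    apply: keyn_zero; [lia|lia|]. apply: (key0n_congr H3); lia.
  + exists 2, 0; rewrite /cond6 /key6 /mv /= ?d0 ?d1 ?d2 ?d3 ?d4 ?ux ?g0 ?g1 ?g2 ?g3 ?g4 ?vx.
    case: H => H1 [H2 H3].
    split; [done|split; [done|split; [done|split; [lia|split; [lia|split; [rewrite /condn; lia| ]]]]]].
    apply: keyn_zero; [lia|lia|]. apply: (key0n_congr H3); lia.
  + exists 2, 1; rewrite /cond6 /key6 /mv /= ?d0 ?d1 ?d2 ?d3 ?d4 ?ux ?g0 ?g1 ?g2 ?g3 ?g4 ?vx.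
    case: H => H1 [H2 H3].
    split; [done|split; [done|split; [done|split; [lia|split; [lia|split; [rewrite /condn; lia| ]]]]]].
    apply: keyn_zero; [lia|lia|]. apply: (key0n_congr H3); lia.
  + exists 2, 3; rewrite /cond6 /key6 /mv /= ?d0 ?d1 ?d2 ?d3 ?d4 ?ux ?g0 ?g1 ?g2 ?g3 ?g4 ?vx.
    case: H => H1 [H2 H3].
    split; [done|split; [done|split; [done|split; [lia|split; [lia|split; [rewrite /condn; lia| ]]]]]].
    apply: keyn_zero; [lia|lia|]. apply: (key0n_congr H3); lia.
  + exists 2, 5; rewrite /cond6 /key6 /mv /= ?d0 ?d1 ?d2 ?d3 ?d4 ?ux ?g0 ?g1 ?g2 ?g3 ?g4 ?vx.
    case: H => H1 [H2 H3].
    split; [done|split; [done|split; [done|split; [lia|split; [lia|split; [rewrite /condn; lia| ]]]]]].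
    apply: keyn_zero; [lia|lia|]. apply: (key0n_congr H3); lia.
  + exists 3, 0; rewrite /cond6 /key6 /mv /= ?d0 ?d1 ?d2 ?d3 ?d4 ?ux ?g0 ?g1 ?g2 ?g3 ?g4 ?vx.
    case: H => H1 [H2 H3].
    split; [done|split; [done|split; [done|split; [lia|split; [lia|split; [rewrite /condn; lia| ]]]]]].
    apply: keyn_zero; [lia|lia|]. apply: (key0n_congr H3); lia.
  + exists 3, 1; rewrite /cond6 /key6 /mv /= ?d0 ?d1 ?d2 ?d3 ?d4 ?ux ?g0 ?g1 ?g2 ?g3 ?g4 ?vx.
    case: H => H1 [H2 H3].
    split; [done|split; [done|split; [done|split; [lia|split; [lia|split; [rewrite /condn; lia| ]]]]]].
    apply: keyn_zero; [lia|lia|]. apply: (key0n_congr H3); lia.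
  + exists 3, 2; rewrite /cond6 /key6 /mv /= ?d0 ?d1 ?d2 ?d3 ?d4 ?ux ?g0 ?g1 ?g2 ?g3 ?g4 ?vx.
    case: H => H1 [H2 H3].
    split; [done|split; [done|split; [done|split; [lia|split; [lia|split; [rewrite /condn; lia| ]]]]]].
    apply: keyn_zero; [lia|lia|]. apply: (key0n_congr H3); lia.
  + exists 3, 5; rewrite /cond6 /key6 /mv /= ?d0 ?d1 ?d2 ?d3 ?d4 ?ux ?g0 ?g1 ?g2 ?g3 ?g4 ?vx.
    case: H => H1 [H2 H3].
    split; [done|split; [done|split; [done|split; [lia|split; [lia|split; [rewrite /condn; lia| ]]]]]].
    apply: keyn_zero; [lia|lia|]. apply: (key0n_congr H3); lia.
  + exists 5, 0; rewrite /cond6 /key6 /mv /= ?d0 ?d1 ?d2 ?d3 ?d4 ?ux ?g0 ?g1 ?g2 ?g3 ?g4 ?vx.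
    case: H => H1 [H2 H3].
    split; [done|split; [done|split; [done|split; [lia|split; [lia|split; [rewrite /condn; lia| ]]]]]].
    apply: keyn_zero; [lia|lia|]. apply: (key0n_congr H3); lia.
  + exists 5, 1; rewrite /cond6 /key6 /mv /= ?d0 ?d1 ?d2 ?d3 ?d4 ?ux ?g0 ?g1 ?g2 ?g3 ?g4 ?vx.
    case: H => H1 [H2 H3].
    split; [done|split; [done|split; [done|split; [lia|split; [lia|split; [rewrite /condn; lia| ]]]]]].
    apply: keyn_zero; [lia|lia|]. apply: (key0n_congr H3); lia.
  + exists 5, 2; rewrite /cond6 /key6 /mv /= ?d0 ?d1 ?d2 ?d3 ?d4 ?ux ?g0 ?g1 ?g2 ?g3 ?g4 ?vx.
    case: H => H1 [H2 H3].
    split; [done|split; [done|split; [done|split; [lia|split; [lia|split; [rewrite /condn; lia| ]]]]]].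
    apply: keyn_zero; [lia|lia|]. apply: (key0n_congr H3); lia.
  + exists 5, 3; rewrite /cond6 /key6 /mv /= ?d0 ?d1 ?d2 ?d3 ?d4 ?ux ?g0 ?g1 ?g2 ?g3 ?g4 ?vx.
    case: H => H1 [H2 H3].
    split; [done|split; [done|split; [done|split; [lia|split; [lia|split; [rewrite /condn; lia| ]]]]]].
    apply: keyn_zero; [lia|lia|]. apply: (key0n_congr H3); lia.
Qed.

Lemma exch6 s u v : 2 <= s -> cond6 s u -> cond6 s v -> lexlt (key6 s u) (key6 s v) -> Wit6 s u v.
Proof.
move=> Hs Hu Hv; rewrite /key6 => /(keyn_cases Hu Hv) [h|[[hx [hxx hl]]|[ux [vx hl]]]].
- exact: case1.
- case: hl => [h|[e0 [h|[e1 [h|[e2 [h|[e3 h]]]]]]]].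
  + exact: (case2_0 Hu Hv hx hxx h).
  + exact: (case2_1 Hu Hv hx hxx e0 h).
  + exact: (case2_2 Hu Hv hx hxx e0 e1 h).
  + exact: (case2_3 Hu Hv hx hxx e0 e1 e2 h).
  + exact: (case2_4 Hu Hv hx hxx e0 e1 e2 e3 h).
- exact: (case3d Hs Hu Hv ux vx hl).
Qed.

Definition edges_nat : seq (nat * nat) :=
  [:: (0,1); (0,2); (0,4); (1,4); (1,3); (4,2); (4,3); (2,5); (3,5)].
Definition sub2 (d : nat -> nat) (i j : nat) : nat -> nat := fun k => d k - (k == i) - (k == j).
Ltac fdec I J := exists I, J; rewrite /cond6 /sub2 /=;
  split; [done|split; [lia|split; [lia|rewrite /condn; lia]]].
Lemma decomp s (d : nat -> nat) : cond6 s.+1 d -> exists i j, (i, j) \in edges_nat /\ 0 < d i /\ 0 < d j /\ cond6 s (sub2 d i j).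
Proof. rewrite /cond6 /condn => Hd.
  case: (leqP ((d 5)) (0)) => ?.
  {
    case: (leqP ((d 2)) (0)) => ?.
    {
      case: (leqP (s.+1) ((d 0)+(d 3))) => ?.
      {
        case: (leqP ((d 0)) (0)) => ?.
        {
          case: (leqP ((d 1)) (0)) => ?.
          {
            fdec 4 3.
          }
          {
            fdec 1 3.
          }
        }
        {
          case: (leqP ((d 1)) (0)) => ?.
          {
            fdec 0 4.
          }
          {
            fdec 0 1.
          }
        }
      }
      {
        fdec 1 4.
      }
    }
    {
      case: (leqP (s.+1) ((d 0)+(d 3))) => ?.
      {
        fdec 0 2.
      }
      {
        fdec 4 2.
      }
    }
  }
  {
    case: (leqP ((d 2)) (0)) => ?.
    {
      fdec 3 5.
    }
    {
      case: (leqP (s.+1) ((d 0)+(d 3))) => ?.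
      {
        fdec 0 2.
      }
      {
        fdec 2 5.
      }
    }
  }
Qed.

Lemma keyn_inj s a b p q x z a' b' p' q' x' z' :
  keyn s a b p q x z = keyn s a' b' p' q' x' z' ->
  [/\ a = a', b = b', p = p', q = q' & x = x' /\ z = z'].
Proof.
rewrite /keyn; case: (posnP x) => [x0|xp]; case: (posnP x') => [x0'|xp'] //=.
- case=> /eqP; rewrite eqseq_cat ?size_key0n // => /andP[_ /eqP [-> -> -> -> -> ->]].
  by split.
- by case=> -> -> -> -> -> ->; split.
Qed.

Import GRing.Theory.

Section Alg.
Local Open Scope ring_scope.

Lemma in_ideal0 (K : fieldType) (n : nat) (gs : seq {mpoly K[n]}) : in_ideal gs 0.
Proof. by exists (fun _ => 0); rewrite big1 // => i _; rewrite mul0r. Qed.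

Lemma in_idealD (K : fieldType) (n : nat) (gs : seq {mpoly K[n]}) f g :
  in_ideal gs f -> in_ideal gs g -> in_ideal gs (f + g).
Proof.
move=> [c1 ->] [c2 ->]; exists (fun i => c1 i + c2 i).
by rewrite -big_split /=; apply: eq_bigr => i _; rewrite mulrDl.
Qed.

Lemma in_idealM (K : fieldType) (n : nat) (gs : seq {mpoly K[n]}) h f :
  in_ideal gs f -> in_ideal gs (h * f).
Proof.
move=> [c ->]; exists (fun i => h * c i).
by rewrite mulr_sumr; apply: eq_bigr => i _; rewrite mulrA.
Qed.

Lemma in_ideal_mem (K : fieldType) (n : nat) (gs : seq {mpoly K[n]}) g :
  g \in gs -> in_ideal gs g.
Proof.
move=> gin; have ilt : (index g gs < size gs)%N by rewrite index_mem.
exists (fun i => if val i == index g gs then 1 else 0).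
rewrite (bigD1 (Ordinal ilt)) //= eqxx mul1r nth_index // big1 ?addr0 // => i ne.
rewrite ifF ?mul0r //; apply: contraNF ne => /eqP e; apply/eqP/val_inj; exact: e.
Qed.

Lemma msuppMX_mem (K : fieldType) (n : nat) (p : {mpoly K[n]}) (u m : 'X_{1..n}) :
  (m \in msupp (p * 'X_[u])) = (m \in [seq (u + m')%MM | m' <- msupp p]).
Proof. exact: (perm_mem (msuppMX p u)). Qed.

Lemma in_idealX (K : fieldType) (n : nat) (ms : seq 'X_{1..n}) (f : {mpoly K[n]}) :
  in_ideal [seq 'X_[m] | m <- ms] f <->
  (forall m, m \in msupp f -> has (fun g => (g <= m)%MM) ms).
Proof.
split.
- move=> [c ->] m; rewrite mcoeff_msupp; apply: contraTT => /hasPn hn.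
  rewrite negbK raddf_sum /=; apply/eqP; apply: big1 => i _.
  have ilt : (i < size ms)%N by case: i => i /=; rewrite size_map.
  rewrite (nth_map 0%MM) //.
  apply/eqP; rewrite -[_ == 0]negbK -mcoeff_msupp msuppMX_mem.
  apply/mapP => -[m' _ e].
  have := hn _ (mem_nth 0%MM ilt); rewrite e lem_addr //.
- move=> H; rewrite (mpolyE f).
  have : all (fun m => has (fun g => (g <= m)%MM) ms) (msupp f) by apply/allP.
  elim: (msupp f) => [|m r IH] /=; first by move=> _; rewrite big_nil; exact: in_ideal0.
  case/andP => hm hr; rewrite big_cons; apply: in_idealD (IH hr).
  case/hasP: hm => g gin hle.
  have -> : 'X_[m] = 'X_[(m - g)%MM] * 'X_[g] :> {mpoly K[n]} by rewrite -mpolyXD submK.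
  rewrite scalerAl; apply: in_idealM; apply: in_ideal_mem.
  by apply/mapP; exists g.
Qed.

End Alg.

Definition em (k : nat) : 'X_{1..6} := let e := nth (va, va) edgesG k in (U_(e.1) + U_(e.2))%MM.
Definition pw (s : nat) (f : {ffun 'I_s -> 'I_9}) : 'X_{1..6} := (\sum_(j < s) em (f j))%MM.
Definition ms (s : nat) : seq 'X_{1..6} := [seq pw f | f <- enum {ffun 'I_s -> 'I_9}].

Lemma ipg_eq (K : fieldType) s :
  ideal_power_gens (edge_ideal_gens K) s = [seq 'X_[m] | m <- ms s].
Proof.
rewrite /ideal_power_gens /ms -map_comp; apply: eq_map => f /=.
rewrite /pw -mprodXE; apply: eq_bigr => j _.
rewrite /edge_ideal_gens (nth_map (va, va)) ?mpolyXD //.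
Qed.

Definition cv (m : 'X_{1..6}) : nat -> nat := fun i =>
  match i with 0 => m va | 1 => m vb | 2 => m vp | 3 => m vq | 4 => m vx | _ => m vz end.

Lemma cvE (m : 'X_{1..6}) (i : 'I_6) : m i = cv m i.
Proof. by case: i => [[|[|[|[|[|[|//]]]]]] Hi] /=; congr (m _); apply: val_inj. Qed.

Lemma cvE' (m : 'X_{1..6}) c : c < 6 -> cv m c = m (inord c).
Proof. by move=> hc; rewrite cvE inordK. Qed.

Lemma cv_add m1 m2 i : cv (m1 + m2)%MM i = cv m1 i + cv m2 i.
Proof. by case: i => [|[|[|[|[|i]]]]] /=; rewrite mnmDE. Qed.

Lemma cv_sub m1 m2 i : cv (m1 - m2)%MM i = cv m1 i - cv m2 i.
Proof. by case: i => [|[|[|[|[|i]]]]] /=; rewrite mnmBE. Qed.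

Lemma cv0 i : cv 0%MM i = 0.
Proof. by case: i => [|[|[|[|[|i]]]]] /=; rewrite mnm0E. Qed.

Lemma cvU (l : 'I_6) c : c < 6 -> cv U_(l)%MM c = (nat_of_ord l == c).
Proof. by move=> hc; rewrite cvE' // mnm1E; congr nat_of_bool; rewrite -(inj_eq (@ord_inj 6)) /= inordK. Qed.

Lemma cond_seq (r : seq 'I_9) : cond6 (size r) (cv (\sum_(k <- r) em k)%MM).
Proof.
elim: r => [|k r IH]; first by rewrite big_nil /cond6 !cv0 /condn /=; lia.
rewrite big_cons /cond6 !cv_add; move: IH; rewrite /cond6 /condn /=.
by case: k => [[|[|[|[|[|[|[|[|[|//]]]]]]]]] Hk]; rewrite /em !mnm1E /=; lia.
Qed.

Lemma ms_cond s m : m \in ms s -> cond6 s (cv m).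
Proof.
case/mapP => f _ ->; rewrite /pw -(big_map f xpredT em).
have := cond_seq [seq f j | j <- index_enum 'I_s].
by rewrite size_map [index_enum _]unlock -enumT size_enum_ord.
Qed.

Lemma edges_nat_eq : edges_nat = [seq (val e.1 : nat, val e.2 : nat) | e <- edgesG].
Proof. by []. Qed.

Lemma cond_ms s m : cond6 s (cv m) -> m \in ms s.
Proof.
elim: s m => [|s IH] m hm.
- have -> : m = 0%MM.
    apply/mnmP => i; rewrite mnm0E cvE; move: hm; rewrite /cond6 /condn.
    by case: i => [[|[|[|[|[|[|//]]]]]] Hi] /=; lia.
  apply/mapP; exists [ffun i : 'I_0 => (ord0 : 'I_9)]; first by rewrite mem_enum.
  by rewrite /pw big_ord0.
- have [i [j [hij [hi [hj hsub]]]]] := decomp hm.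
  have hneq : i != j.
    have : all (fun p => p.1 != p.2) edges_nat by [].
    by move/allP/(_ _ hij).
  have := hij; rewrite edges_nat_eq => /mapP [e ein [ei ej]].
  have klt : index e edgesG < 9 by rewrite -[9]/(size edgesG) index_mem.
  pose kk : 'I_9 := Ordinal klt.
  have emk : em kk = (U_(e.1) + U_(e.2))%MM by rewrite /em /= nth_index.
  have E : forall c, c < 6 -> cv (m - em kk)%MM c = sub2 (cv m) i j c.
    move=> c hc; rewrite cv_sub emk cv_add !cvU // /sub2 ei ej subnDA.
    by rewrite [nat_of_ord e.1 == c]eq_sym [nat_of_ord e.2 == c]eq_sym.
  have hc' : cond6 s (cv (m - em kk)%MM) by rewrite /cond6 !E.
  have hle : (em kk <= m)%MM.
    apply/mnm_lepP => c; rewrite emk mnmDE !mnm1E cvE.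
    rewrite -!(inj_eq (@ord_inj 6)) -ei -ej.
    move: (nat_of_ord c) => c'; case: eqP => [<-|n1]; case: eqP => [e2|n2] /=; [by rewrite e2 eqxx in hneq|lia|rewrite -e2; lia|lia].
  have [f' _ ef'] := mapP (IH _ hc').
  apply/mapP; exists [ffun x : 'I_s.+1 => if unlift ord_max x is Some y then f' y else kk];
    first by rewrite mem_enum.
  rewrite /pw big_ord_recr /= ffunE unlift_none.
  have wl : forall y : 'I_s, widen_ord (leqnSn s) y = lift ord_max y.
    by move=> y; apply: val_inj; rewrite /= /bump leqNgt ltn_ord.
  rewrite (eq_bigr (fun y => em (f' y))) => [|y _]; last by rewrite ffunE wl liftK.
  by rewrite -/(pw f') -ef' submK.
Qed.

Lemma mdeg_ms s m : m \in ms s -> mdeg m = 2 * s.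
Proof.
case/mapP => f _ ->; rewrite /pw mdeg_sum.
rewrite (eq_bigr (fun _ => 2)) => [|j _]; last by rewrite /em mdegD !mdeg1.
by rewrite sum_nat_const card_ord mulnC.
Qed.

Lemma lem_mdeg (a b : 'X_{1..6}) : (a <= b)%MM -> mdeg a <= mdeg b.
Proof. by move=> h; rewrite -(submK h) mdegD leq_addl. Qed.

Lemma lem_mdeg_eq (a b : 'X_{1..6}) : (a <= b)%MM -> mdeg a = mdeg b -> a = b.
Proof.
move=> hab hd.
have : mdeg (b - a)%MM = 0 by have := mdegD (b - a)%MM a; rewrite submK // => e; lia.
by move/eqP; rewrite mdeg_eq0 => /eqP h; rewrite -(submK hab) h add0m.
Qed.

Lemma mon_dvdE n (m1 m2 : 'X_{1..n}) : mon_dvd m1 m2 = (m1 <= m2)%MM.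
Proof. by apply/forallP/mnm_lepP. Qed.

Lemma in_ideal_pow (K : fieldType) s (f : {mpoly K[6]}) :
  in_ideal (ideal_power_gens (edge_ideal_gens K) s) f <->
  (forall m, m \in msupp f -> has (fun g => (g <= m)%MM) (ms s)).
Proof. by rewrite ipg_eq; exact: in_idealX. Qed.

Lemma mingen_iff (K : fieldType) s m :
  min_mon_gen (ideal_power_gens (edge_ideal_gens K) s) m <-> m \in ms s.
Proof.
rewrite /min_mon_gen; split.
- case=> /in_ideal_pow hin hmin.
  have := hin m; rewrite msuppX mem_seq1 eqxx => /(_ isT) /hasP [g gin hle].
  have hg : in_ideal (ideal_power_gens (edge_ideal_gens K) s) 'X_[g].
    apply/in_ideal_pow => m'; rewrite msuppX mem_seq1 => /eqP ->.
    by apply/hasP; exists g => //; exact: lepm_refl.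
  by have := hmin g hg; rewrite mon_dvdE => /(_ hle) <-.
- move=> hm; split.
  + apply/in_ideal_pow => m'; rewrite msuppX mem_seq1 => /eqP ->.
    by apply/hasP; exists m => //; exact: lepm_refl.
  + move=> m' /in_ideal_pow hin; rewrite mon_dvdE => hle.
    have := hin m'; rewrite msuppX mem_seq1 eqxx => /(_ isT) /hasP [g gin hg].
    have hgm : (g <= m)%MM.
      apply/mnm_lepP => i; move/mnm_lepP: hg => /(_ i) h1; move/mnm_lepP: hle => /(_ i) h2.
      exact: leq_trans h1 h2.
    have egm : g = m by apply: lem_mdeg_eq hgm _; rewrite (mdeg_ms gin) (mdeg_ms hm).
    have d1 := lem_mdeg hle; have d2 := lem_mdeg hg.
    apply: (lem_mdeg_eq hle); move: d1 d2; rewrite egm; lia.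
Qed.

Definition keym s (m : 'X_{1..6}) := key6 s (cv m).
Definition Rk s : rel 'X_{1..6} := fun x y => ~~ lexlt (keym s x) (keym s y).

Lemma size_keym s m : size (keym s m) = 11.
Proof. exact: size_keyn. Qed.

Lemma Rk_total s : total (Rk s).
Proof.
move=> x y; rewrite /Rk -negb_and; apply/negP => /andP[h1 h2].
by rewrite (lexlt_asym h1) in h2.
Qed.

Lemma Rk_trans s : transitive (Rk s).
Proof.
move=> y x z hxy hyz; rewrite /Rk; apply/negP => hxz.
case: (eqVneq (keym s x) (keym s y)) => [e|ne].
  by move: hyz; rewrite /Rk -e hxz.
have := lexlt_total (etrans (size_keym s x) (esym (size_keym s y))) ne.
case/orP => h; first by move: hxy; rewrite /Rk h.
by move: hyz; rewrite /Rk (lexlt_trans h hxz).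
Qed.

Lemma keym_inj s x y : keym s x = keym s y -> x = y.
Proof.
rewrite /keym /key6 => /keyn_inj [ea eb ep eq [ex ez]].
by apply/mnmP => i; rewrite !cvE; case: i => [[|[|[|[|[|[|//]]]]]] Hi] /=.
Qed.

Theorem proposition5p4 (K : fieldType) (s : nat) :
  (2 <= s)%N -> has_linear_quotients (ideal_power_gens (edge_ideal_gens K) s).
Proof.
move=> hs.
pose u := sort (Rk s) (undup (ms s)).
have uu : uniq u by rewrite sort_uniq undup_uniq.
have memu : forall m, (m \in u) = (m \in ms s) by move=> m; rewrite mem_sort mem_undup.
have srt : sorted (Rk s) u := sort_sorted (@Rk_total s) _.
have ltR : forall j i, j < i -> i < size u -> Rk s (nth 0%MM u j) (nth 0%MM u i).
  move=> j i ji isz; apply: (sorted_ltn_nth (@Rk_trans s) 0%MM srt) => //.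
  by rewrite inE (ltn_trans ji isz).
exists u; split => //; split.
  by move=> m; rewrite memu; split => /mingen_iff.
move=> i /andP[i1 isz].
pose ui := nth 0%MM u i.
have uiu : ui \in u by exact: mem_nth.
have hsz : size (take i u) = i by rewrite size_take isz.
pose S := [set l : 'I_6 | has (fun w => (w <= ui + U_(l))%MM) (take i u)].
have P : forall m', has (fun g => (g <= ui + m')%MM) (take i u) =
                    has (fun g => (g <= m')%MM) [seq U_(k)%MM | k <- enum S].
  move=> m'; apply/idP/idP.
  - case/hasP => g gt hg.
    have gu : g \in u by exact: mem_take gt.
    have hj' : index g (take i u) < i by move: gt; rewrite -index_mem hsz.
    have eg : nth 0%MM u (index g (take i u)) = g by rewrite -(nth_take _ hj') nth_index.
    have Rg : Rk s g ui by rewrite -eg; apply: ltR.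
    have gne : g != ui.
      rewrite -eg /ui nth_uniq //; first by rewrite neq_ltn hj'.
      exact: ltn_trans hj' isz.
    have kne : keym s ui != keym s g by apply: contra gne => /eqP /keym_inj ->.
    have lt1 : lexlt (keym s ui) (keym s g).
      by case/orP: (lexlt_total (etrans (size_keym s ui) (esym (size_keym s g))) kne) => // h; move: Rg; rewrite /Rk h.
    have uims : ui \in ms s by rewrite -memu.
    have gms : g \in ms s by rewrite -memu.
    have [l [t [hl [ht [hlt [hpos [hgl [hc hk]]]]]]]] := exch6 hs (ms_cond uims) (ms_cond gms) lt1.
    pose L : 'I_6 := Ordinal hl. pose T : 'I_6 := Ordinal ht.
    pose w := (ui + U_(L) - U_(T))%MM.
    have Ew : forall c, c < 6 -> cv w c = mv (cv ui) l t c.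
      by move=> c hc6; rewrite /w cv_sub cv_add !cvU // /mv /= [l == c]eq_sym [t == c]eq_sym.
    have wc : cond6 s (cv w).
      rewrite /cond6 !Ew //; exact: hc.
    have wk : keym s w = key6 s (mv (cv ui) l t) by rewrite /keym /key6 !Ew.
    have wms : w \in ms s by exact: cond_ms.
    have wu : w \in u by rewrite memu.
    have ltw : lexlt (keym s ui) (keym s w) by rewrite wk.
    have iw : index w u < i.
      rewrite ltnNge; apply/negP => hle.
      have wsz : index w u < size u by rewrite index_mem.
      case: (ltngtP i (index w u)) hle => // [hiw|eiw] _.
      + by move: (ltR _ _ hiw wsz); rewrite nth_index // /Rk ltw.
      + have ewu : w = ui by rewrite /ui eiw nth_index.
        by move: ltw; rewrite ewu lexlt_irr.
    have wt : w \in take i u.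
      by rewrite -(nth_index 0%MM wu) -(nth_take _ iw); apply: mem_nth; rewrite hsz.
    apply/hasP; exists U_(L)%MM.
      apply: map_f; rewrite mem_enum inE; apply/hasP; exists w => //.
      by rewrite /w lem_subr.
    apply/mnm_lepP => c; rewrite mnm1E; case: eqP => [<-|] //=.
    move/mnm_lepP: hg => /(_ L); rewrite mnmDE (cvE g) (cvE ui) (cvE m') /= => hgL.
    clear -hgL hgl; lia.
  - case/hasP => k' /mapP [L Lin ->] hL.
    rewrite mem_enum inE in Lin; case/hasP: Lin => w wt hw.
    apply/hasP; exists w => //.
    apply/mnm_lepP => c; move/mnm_lepP: hw => /(_ c); move/mnm_lepP: hL => /(_ c); rewrite !mnmDE; lia.
exists S => f.
have -> : [seq 'X_k | k <- enum S] = [seq 'X_[m] | m <- [seq U_(k)%MM | k <- enum S]] :> seq {mpoly K[6]}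
  by rewrite -map_comp.
split.
- move/in_idealX => H; apply/in_idealX => m' hm'; rewrite -P; apply: H; rewrite msuppMX_mem; exact: map_f.
- move/in_idealX => H; apply/in_idealX => m; rewrite msuppMX_mem => /mapP [m' hm' ->]; rewrite P; exact: H.
Qed.
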